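(* Let $V,g$ be as below and let $Q_J=\tfrac43\,Q^+\nu Q^-_\tau\nu Q^+$ and $Q_R=\tfrac43\,Q^-\nu Q^+_\tau\nu Q^-$, as linear operators on $PC(V)$ (products meaning composition). Then $Q_J$ and $Q_R$ are idempotent and self-adjoint with respect to the inner product on $PC(V)$ induced by $g$; $Q_J$ has range $JC(V,g)$ and $Q_R$ has range $RC(V,g)$; and $Q_JQ_R=0$, so $JC(V,g)$ and $RC(V,g)$ are orthogonal in $PC(V)$.
   Context: $V$ is a finite-dimensional real vector space with nondegenerate symmetric bilinear form $g$. $PC(V)$ is the space of bilinear maps $T:V\times V\to L(V;V)$, identified with $V^*\otimes V^*\otimes V^*\otimes V$ and carrying the nondegenerate inner product induced by $g$. Linear involutions of $PC(V)$: $(\tau T)(u,v)=T(v,u)$; $(\alpha T)(u,v)=T(u,v)^*$ ($g$-adjoint); $\chi T$ given by $g((\chi T)(u,v)w,x)=g(T(w,x)u,v)$; $(\nu T)(u,v)w=T(w,v)u$. For such an involution $B$, $Q^\pm_B=\tfrac12(1\pm B)$. $Q^+=Q^+_\chi Q^+_\alpha Q^+_\tau$, $Q^-=Q^+_\chi Q^-_\alpha Q^-_\tau$. $\mathrm{Cycl}(T)(u,v)w=T(u,v)w+T(v,w)u+T(w,u)v$. $JC(V,g)$ (resp. $RC(V,g)$) is the set of $T$ with $\mathrm{Cycl}(T)=0$, $\chi T=T$ and $\tau T=T$ (resp. $\tau T=-T$). *)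

(* Defs.v *)
From mathcomp Require Import all_boot all_order all_algebra.
Set Implicit Arguments. Unset Strict Implicit. Unset Printing Implicit Defensive.
Import Order.TTheory GRing.Theory Num.Theory.
Local Open Scope ring_scope.

(* V = R^n with standard basis e_0..e_{n-1}; the symmetric bilinear form g is
   g(u,v) = sum_{a,b} u_a G_{ab} v_b, with G symmetric and invertible
   (nondegenerate).  An element T of PC(V) = V*(x)V*(x)V*(x)V is given by its
   components:  T(e_i,e_j) e_k = sum_l (T i j k l) e_l.                    *)

Definition PC (R : realFieldType) (n : nat) := 'I_n -> 'I_n -> 'I_n -> 'I_n -> R.

Section PCdefs.
Variables (R : realFieldType) (n : nat) (G : 'M[R]_n).

Definition Ginv : 'M[R]_n := invmx G.

Definition pc_add (T S : PC R n) : PC R n := fun i j k l => T i j k l + S i j k l.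
Definition pc_scale (c : R) (T : PC R n) : PC R n := fun i j k l => c * T i j k l.
Definition pc_zero : PC R n := fun _ _ _ _ => 0.

(* inner product on V*(x)V*(x)V*(x)V induced by g (g^{-1} on V*, g on V) *)
Definition pc_inner (T S : PC R n) : R :=
  \sum_(i < n) \sum_(j < n) \sum_(k < n) \sum_(l < n)
  \sum_(a < n) \sum_(b < n) \sum_(c < n) \sum_(d < n)
    Ginv i a * Ginv j b * Ginv k c * G l d * T i j k l * S a b c d.

(* lowering / raising the last index with g: lower T i j k m = g(T(e_i,e_j)e_k, e_m) *)
Definition lower (T : PC R n) : PC R n :=
  fun i j k m => \sum_(l < n) T i j k l * G l m.
Definition raise (S : PC R n) : PC R n :=
  fun i j k l => \sum_(m < n) S i j k m * Ginv m l.

Definition tau (T : PC R n) : PC R n := fun i j k l => T j i k l.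
(* (alpha T)(u,v) = T(u,v)^*  (g-adjoint):
   g((alpha T)(u,v) w, x) = g(w, T(u,v) x) = g(T(u,v) x, w) *)
Definition alpha (T : PC R n) : PC R n :=
  raise (fun i j k m => lower T i j m k).
(* g((chi T)(u,v) w, x) = g(T(w,x) u, v) *)
Definition chi (T : PC R n) : PC R n :=
  raise (fun i j k m => lower T k m i j).
Definition nu (T : PC R n) : PC R n := fun i j k l => T k j i l.

Definition Qplus_of (B : PC R n -> PC R n) (T : PC R n) : PC R n :=
  pc_scale (1/2) (pc_add T (B T)).
Definition Qminus_of (B : PC R n -> PC R n) (T : PC R n) : PC R n :=
  pc_scale (1/2) (pc_add T (pc_scale (-1) (B T))).

Definition Qplus (T : PC R n) : PC R n :=
  Qplus_of chi (Qplus_of alpha (Qplus_of tau T)).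
Definition Qminus (T : PC R n) : PC R n :=
  Qplus_of chi (Qminus_of alpha (Qminus_of tau T)).

Definition QJ (T : PC R n) : PC R n :=
  pc_scale (4/3) (Qplus (nu (Qminus_of tau (nu (Qplus T))))).
Definition QR (T : PC R n) : PC R n :=
  pc_scale (4/3) (Qminus (nu (Qplus_of tau (nu (Qminus T))))).

Definition Cycl (T : PC R n) : PC R n :=
  fun i j k l => T i j k l + T j k i l + T k i j l.

Definition JC (T : PC R n) : Prop :=
  Cycl T = pc_zero /\ chi T = T /\ tau T = T.
Definition RC (T : PC R n) : Prop :=
  Cycl T = pc_zero /\ chi T = T /\ tau T = pc_scale (-1) T.

End PCdefs.

(* Main.v *)
Require Import Defs.
From mathcomp Require Import all_boot all_order all_algebra.
From mathcomp Require Import ring lra.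
From Stdlib Require Import FunctionalExtensionality.
Import Order.TTheory GRing.Theory Num.Theory.
Local Open Scope ring_scope.

Section Inf.
Variables (R : realFieldType) (n : nat) (G : 'M[R]_n).
Hypotheses (Gsym : G^T = G) (Gu : G \in unitmx).
Local Notation Gi := (Ginv G).

Lemma funext4 (X Y : PC R n) : (forall i j k m, X i j k m = Y i j k m) -> X = Y.
Proof.
move=> H; apply: functional_extensionality => i; apply: functional_extensionality => j.
apply: functional_extensionality => k; apply: functional_extensionality => m; exact: H.
Qed.

Lemma row_mul2 (u : 'I_n -> R) (A B : 'M[R]_n) p :
  \sum_(l < n) (\sum_(m < n) u m * A m l) * B l p = ((\row_m u m) *m A *m B) 0 p.
Proof.
rewrite !mxE; apply: eq_bigr => l _; rewrite !mxE; congr (_ * _).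
by apply: eq_bigr => m _; rewrite mxE.
Qed.

Lemma K1 (u : 'I_n -> R) p :
  \sum_(l < n) (\sum_(m < n) u m * G m l) * Gi l p = u p.
Proof. by rewrite row_mul2 /Ginv mulmxK // mxE. Qed.

Lemma K2 (u : 'I_n -> R) p :
  \sum_(l < n) (\sum_(m < n) u m * Gi m l) * G l p = u p.
Proof. by rewrite row_mul2 /Ginv mulmxKV // mxE. Qed.

Lemma lower_raise (S : PC R n) : lower G (raise G S) = S.
Proof. apply: funext4 => i j k m; exact: K2. Qed.

Lemma raise_lower (S : PC R n) : raise G (lower G S) = S.
Proof. apply: funext4 => i j k m; exact: K1. Qed.

Lemma lower_inj (X Y : PC R n) : lower G X = lower G Y -> X = Y.
Proof. by move=> H; rewrite -(raise_lower X) H raise_lower. Qed.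

Definition alphaL (T : PC R n) : PC R n := fun i j k m => T i j m k.
Definition chiL (T : PC R n) : PC R n := fun i j k m => T k m i j.

Lemma lower_add X Y : lower G (pc_add X Y) = pc_add (lower G X) (lower G Y).
Proof. apply: funext4 => i j k m; rewrite /lower /pc_add -big_split /=.
by apply: eq_bigr => l _; rewrite mulrDl. Qed.

Lemma lower_scale c X : lower G (pc_scale c X) = pc_scale c (lower G X).
Proof. apply: funext4 => i j k m; rewrite /lower /pc_scale mulr_sumr.
by apply: eq_bigr => l _; rewrite mulrA. Qed.

Lemma lower_tau X : lower G (tau X) = tau (lower G X).
Proof. by []. Qed.
Lemma lower_nu X : lower G (nu X) = nu (lower G X).
Proof. by []. Qed.
Lemma lower_alpha X : lower G (alpha G X) = alphaL (lower G X).
Proof. by rewrite /alpha lower_raise. Qed.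
Lemma lower_chi X : lower G (chi G X) = chiL (lower G X).
Proof. by rewrite /chi lower_raise. Qed.
Lemma lower_zero : lower G (@pc_zero R n) = @pc_zero R n.
Proof. apply: funext4 => i j k m; rewrite /lower /pc_zero big1 // => l _; exact: mul0r. Qed.
Lemma lower_Cycl X : lower G (Cycl X) = Cycl (lower G X).
Proof. apply: funext4 => i j k m; rewrite /lower /Cycl -!big_split /=.
by apply: eq_bigr => l _; rewrite !mulrDl. Qed.

Definition I4 := ('I_n * 'I_n * 'I_n * 'I_n)%type.
Definition uc (L : PC R n) (x : I4) : R := L x.1.1.1 x.1.1.2 x.1.2 x.2.
Definition wt (x y : I4) : R :=
  Gi x.1.1.1 y.1.1.1 * Gi x.1.1.2 y.1.1.2 * Gi x.1.2 y.1.2 * Gi x.2 y.2.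
Definition ip4 (L L' : PC R n) : R :=
  \sum_(x : I4) \sum_(y : I4) wt x y * uc L x * uc L' y.

Lemma pairB (I J : finType) (F : I * J -> R) :
  \sum_(p : I * J) F p = \sum_(i : I) \sum_(j : J) F (i, j).
Proof. by rewrite pair_big; apply: eq_bigr => -[]. Qed.

Lemma sum4 (F : 'I_n -> 'I_n -> 'I_n -> 'I_n -> R) :
  \sum_(i < n) \sum_(j < n) \sum_(k < n) \sum_(l < n) F i j k l
  = \sum_(x : I4) F x.1.1.1 x.1.1.2 x.1.2 x.2.
Proof.
by rewrite [RHS]pairB [RHS]pairB [RHS]pairB.
Qed.

Definition I3 := ('I_n * 'I_n * 'I_n)%type.
Lemma split44 (F : I3 -> 'I_n -> I3 -> 'I_n -> R) :
  \sum_(x : I4) \sum_(y : I4) F x.1 x.2 y.1 y.2 =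
  \sum_(x : I3) \sum_(y : I3) \sum_(a < n) \sum_(b < n) F x a y b.
Proof.
rewrite pairB; apply: eq_bigr => x _; rewrite exchange_big pairB.
by apply: eq_bigr => y _; rewrite exchange_big.
Qed.
Lemma Gs a b : G a b = G b a.
Proof. by rewrite -{1}Gsym mxE. Qed.

Lemma core (u v : 'I_n -> R) :
  \sum_(a < n) \sum_(b < n) Gi a b * ((\sum_(l < n) u l * G l a) * (\sum_(e < n) v e * G e b))
  = \sum_(a < n) \sum_(b < n) G a b * (u a * v b).
Proof.
rewrite exchange_big /=.
transitivity (\sum_(b < n) (\sum_(a < n) (\sum_(l < n) u l * G l a) * Gi a b) * (\sum_(e < n) v e * G e b)).
  apply: eq_bigr => b _; rewrite mulr_suml; apply: eq_bigr => a _; ring.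
apply: eq_bigr => b _; rewrite K1 mulr_sumr; apply: eq_bigr => e _; rewrite (Gs e b); ring.
Qed.

Lemma sum8 (F : 'I_n -> 'I_n -> 'I_n -> 'I_n -> 'I_n -> 'I_n -> 'I_n -> 'I_n -> R) :
  \sum_(i < n) \sum_(j < n) \sum_(k < n) \sum_(l < n)
  \sum_(a < n) \sum_(b < n) \sum_(c < n) \sum_(d < n) F i j k l a b c d
  = \sum_(x : I4) \sum_(y : I4) F x.1.1.1 x.1.1.2 x.1.2 x.2 y.1.1.1 y.1.1.2 y.1.2 y.2.
Proof.
rewrite [RHS]pairB [RHS]pairB [RHS]pairB.
apply: eq_bigr => i _; apply: eq_bigr => j _; apply: eq_bigr => k _; apply: eq_bigr => l _.
by rewrite [RHS]pairB [RHS]pairB [RHS]pairB.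
Qed.

Definition W3 (x y : I3) : R := Gi x.1.1 y.1.1 * Gi x.1.2 y.1.2 * Gi x.2 y.2.
Definition T3 (L : PC R n) (x : I3) (a : 'I_n) : R := L x.1.1 x.1.2 x.2 a.

Lemma inner_ip4 T S : pc_inner G T S = ip4 (lower G T) (lower G S).
Proof.
rewrite /pc_inner (sum8 (fun i j k l a b c d => Ginv G i a * Ginv G j b * Ginv G k c * G l d * T i j k l * S a b c d)) /=.
rewrite (split44 (fun x a y b => W3 x y * G a b * T3 T x a * T3 S y b)).
rewrite /ip4 (split44 (fun x a y b => W3 x y * Gi a b * T3 (lower G T) x a * T3 (lower G S) y b)).
apply: eq_bigr => x _; apply: eq_bigr => y _.
transitivity (W3 x y * \sum_(a < n) \sum_(b < n) G a b * (T3 T x a * T3 S y b)).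
  rewrite mulr_sumr; apply: eq_bigr => a _; rewrite mulr_sumr; apply: eq_bigr => b _; ring.
rewrite -(core (T3 T x) (T3 S y)) mulr_sumr; apply: eq_bigr => a _; rewrite mulr_sumr; apply: eq_bigr => b _.
rewrite /T3 /lower /=; ring.
Qed.
Definition Sp (B : PC R n -> PC R n) (X : PC R n) : PC R n := pc_add X (B X).
Definition Sm (B : PC R n -> PC R n) (X : PC R n) : PC R n := pc_add X (pc_scale (-1) (B X)).
Definition SplusL X := Sp chiL (Sp alphaL (Sp (@tau R n) X)).
Definition SminusL X := Sp chiL (Sm alphaL (Sm (@tau R n) X)).
Definition MJ X := SplusL (nu (Sm (@tau R n) (nu (SplusL X)))).
Definition MR X := SminusL (nu (Sp (@tau R n) (nu (SminusL X)))).

Lemma JC_fix L (HT: forall a b c d, L b a c d = L a b c d)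
  (HC : forall a b c d, L c d a b = L a b c d)
  (HY : forall a b c d, L a b c d + L b c a d + L c a b d = 0) i j k m :
  1/96%:R * MJ L i j k m = L i j k m.
Proof.
rewrite /MJ /SplusL /Sp /Sm /pc_add /pc_scale /nu /tau /chiL /alphaL /=.
have := HT i j k m; have := HC i j k m; have := HY i j k m;
have := HT i j m k; have := HC i j m k; have := HY i j m k;
have := HT i k j m; have := HC i k j m; have := HY i k j m;
have := HT i k m j; have := HC i k m j; have := HY i k m j;
have := HT i m j k; have := HC i m j k; have := HY i m j k;
have := HT i m k j; have := HC i m k j; have := HY i m k j;
have := HT j i k m; have := HC j i k m; have := HY j i k m;
have := HT j i m k; have := HC j i m k; have := HY j i m k;
have := HT j k i m; have := HC j k i m; have := HY j k i m;
have := HT j k m i; have := HC j k m i; have := HY j k m i;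
have := HT j m i k; have := HC j m i k; have := HY j m i k;
have := HT j m k i; have := HC j m k i; have := HY j m k i;
have := HT k i j m; have := HC k i j m; have := HY k i j m;
have := HT k i m j; have := HC k i m j; have := HY k i m j;
have := HT k j i m; have := HC k j i m; have := HY k j i m;
have := HT k j m i; have := HC k j m i; have := HY k j m i;
have := HT k m i j; have := HC k m i j; have := HY k m i j;
have := HT k m j i; have := HC k m j i; have := HY k m j i;
have := HT m i j k; have := HC m i j k; have := HY m i j k;
have := HT m i k j; have := HC m i k j; have := HY m i k j;
have := HT m j i k; have := HC m j i k; have := HY m j i k;
have := HT m j k i; have := HC m j k i; have := HY m j k i;
have := HT m k i j; have := HC m k i j; have := HY m k i j;
have := HT m k j i; have := HC m k j i; have := HY m k j i;
lra.
Qed.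
Lemma RC_fix L (HT: forall a b c d, L b a c d = - L a b c d)
  (HC : forall a b c d, L c d a b = L a b c d)
  (HY : forall a b c d, L a b c d + L b c a d + L c a b d = 0) i j k m :
  1/96%:R * MR L i j k m = L i j k m.
Proof.
rewrite /MR /SminusL /Sp /Sm /pc_add /pc_scale /nu /tau /chiL /alphaL /=.
have := HT i j k m; have := HC i j k m; have := HY i j k m;
have := HT i j m k; have := HC i j m k; have := HY i j m k;
have := HT i k j m; have := HC i k j m; have := HY i k j m;
have := HT i k m j; have := HC i k m j; have := HY i k m j;
have := HT i m j k; have := HC i m j k; have := HY i m j k;
have := HT i m k j; have := HC i m k j; have := HY i m k j;
have := HT j i k m; have := HC j i k m; have := HY j i k m;
have := HT j i m k; have := HC j i m k; have := HY j i m k;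
have := HT j k i m; have := HC j k i m; have := HY j k i m;
have := HT j k m i; have := HC j k m i; have := HY j k m i;
have := HT j m i k; have := HC j m i k; have := HY j m i k;
have := HT j m k i; have := HC j m k i; have := HY j m k i;
have := HT k i j m; have := HC k i j m; have := HY k i j m;
have := HT k i m j; have := HC k i m j; have := HY k i m j;
have := HT k j i m; have := HC k j i m; have := HY k j i m;
have := HT k j m i; have := HC k j m i; have := HY k j m i;
have := HT k m i j; have := HC k m i j; have := HY k m i j;
have := HT k m j i; have := HC k m j i; have := HY k m j i;
have := HT m i j k; have := HC m i j k; have := HY m i j k;
have := HT m i k j; have := HC m i k j; have := HY m i k j;
have := HT m j i k; have := HC m j i k; have := HY m j i k;
have := HT m j k i; have := HC m j k i; have := HY m j k i;
have := HT m k i j; have := HC m k i j; have := HY m k i j;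
have := HT m k j i; have := HC m k j i; have := HY m k j i;
lra.
Qed.

Lemma Gis a b : Gi a b = Gi b a.
Proof. by rewrite /Ginv -[in LHS]Gsym -trmx_inv mxE. Qed.

Lemma ip4_sym X Y : ip4 X Y = ip4 Y X.
Proof.
rewrite /ip4 exchange_big; apply: eq_bigr => x _; apply: eq_bigr => y _.
rewrite /wt (Gis x.1.1.1) (Gis x.1.1.2) (Gis x.1.2) (Gis x.2); ring.
Qed.

Lemma ip4_addl X Y Z : ip4 (pc_add X Y) Z = ip4 X Z + ip4 Y Z.
Proof.
rewrite /ip4 -big_split /=; apply: eq_bigr => x _; rewrite -big_split /=; apply: eq_bigr => y _.
rewrite /uc /pc_add; ring.
Qed.
Lemma ip4_scalel c X Z : ip4 (pc_scale c X) Z = c * ip4 X Z.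
Proof.
rewrite /ip4 mulr_sumr; apply: eq_bigr => x _; rewrite mulr_sumr; apply: eq_bigr => y _.
rewrite /uc /pc_scale; ring.
Qed.
Lemma ip4_addr X Y Z : ip4 Z (pc_add X Y) = ip4 Z X + ip4 Z Y.
Proof. by rewrite ip4_sym ip4_addl !(ip4_sym Z). Qed.
Lemma ip4_scaler c X Z : ip4 Z (pc_scale c X) = c * ip4 Z X.
Proof. by rewrite ip4_sym ip4_scalel !(ip4_sym Z). Qed.

Lemma perm_adj (s : I4 -> I4) (hs : involutive s) (hw : forall x y, wt (s x) (s y) = wt x y)
  (L L0 L' L1 : PC R n) (h1 : forall x, uc L x = uc L0 (s x)) (h2 : forall y, uc L1 y = uc L' (s y)) :
  ip4 L L' = ip4 L0 L1.
Proof.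
rewrite /ip4 (reindex_inj (inv_inj hs)); apply: eq_bigr => x _.
rewrite (reindex_inj (inv_inj hs)); apply: eq_bigr => y _.
by rewrite hw h1 hs h2.
Qed.

Definition selfadj (F : PC R n -> PC R n) := forall X Y, ip4 (F X) Y = ip4 X (F Y).

Lemma tau_adj : selfadj (@tau R n).
Proof.
move=> X Y; apply: (@perm_adj (fun x => (x.1.1.2, x.1.1.1, x.1.2, x.2))) => //.
- by case=> [[[a b] c] d].
- by move=> x y; rewrite /wt /=; ring.
Qed.
Lemma nu_adj : selfadj (@nu R n).
Proof.
move=> X Y; apply: (@perm_adj (fun x => (x.1.2, x.1.1.2, x.1.1.1, x.2))) => //.
- by case=> [[[a b] c] d].
- by move=> x y; rewrite /wt /=; ring.
Qed.
Lemma alpha_adj : selfadj alphaL.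
Proof.
move=> X Y; apply: (@perm_adj (fun x => (x.1.1.1, x.1.1.2, x.2, x.1.2))) => //.
- by case=> [[[a b] c] d].
- by move=> x y; rewrite /wt /=; ring.
Qed.
Lemma chi_adj : selfadj chiL.
Proof.
move=> X Y; apply: (@perm_adj (fun x => (x.1.2, x.2, x.1.1.1, x.1.1.2))) => //.
- by case=> [[[a b] c] d].
- by move=> x y; rewrite /wt /=; ring.
Qed.

Lemma Sp_adj {B} : selfadj B -> selfadj (Sp B).
Proof. by move=> hB X Y; rewrite /Sp ip4_addl ip4_addr hB. Qed.
Lemma Sm_adj {B} : selfadj B -> selfadj (Sm B).
Proof. by move=> hB X Y; rewrite /Sm ip4_addl ip4_addr ip4_scalel ip4_scaler hB. Qed.

Lemma SplusL_adj : selfadj SplusL.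
Proof.
move=> X Y; rewrite /SplusL (Sp_adj chi_adj) (Sp_adj alpha_adj) (Sp_adj tau_adj).
congr ip4; apply: funext4 => i j k m.
rewrite /Sp /Sm /pc_add /pc_scale /tau /chiL /alphaL; ring.
Qed.
Lemma SminusL_adj : selfadj SminusL.
Proof.
move=> X Y; rewrite /SminusL (Sp_adj chi_adj) (Sm_adj alpha_adj) (Sm_adj tau_adj).
congr ip4; apply: funext4 => i j k m.
rewrite /Sp /Sm /pc_add /pc_scale /tau /chiL /alphaL; ring.
Qed.
Lemma MJ_adj : selfadj MJ.
Proof.
move=> X Y; rewrite /MJ SplusL_adj nu_adj (Sm_adj tau_adj) nu_adj SplusL_adj //.
Qed.
Lemma MR_adj : selfadj MR.
Proof.
move=> X Y; rewrite /MR SminusL_adj nu_adj (Sp_adj tau_adj) nu_adj SminusL_adj //.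
Qed.

Lemma lower_Qp {B B'} (h : forall X, lower G (B X) = B' (lower G X)) X :
  lower G (Qplus_of B X) = Qplus_of B' (lower G X).
Proof. by rewrite /Qplus_of lower_scale lower_add h. Qed.
Lemma lower_Qm {B B'} (h : forall X, lower G (B X) = B' (lower G X)) X :
  lower G (Qminus_of B X) = Qminus_of B' (lower G X).
Proof. by rewrite /Qminus_of lower_scale lower_add lower_scale h. Qed.

Definition QplusL X := Qplus_of chiL (Qplus_of alphaL (Qplus_of (@tau R n) X)).
Definition QminusL X := Qplus_of chiL (Qminus_of alphaL (Qminus_of (@tau R n) X)).

Lemma lower_Qplus X : lower G (Qplus G X) = QplusL (lower G X).
Proof. by rewrite /Qplus (lower_Qp lower_chi) (lower_Qp lower_alpha) (lower_Qp lower_tau). Qed.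
Lemma lower_Qminus X : lower G (Qminus G X) = QminusL (lower G X).
Proof. by rewrite /Qminus (lower_Qp lower_chi) (lower_Qm lower_alpha) (lower_Qm lower_tau). Qed.

Lemma lowerQJ T : lower G (QJ G T) = pc_scale (1/96%:R) (MJ (lower G T)).
Proof.
rewrite /QJ lower_scale lower_Qplus lower_nu (lower_Qm lower_tau) lower_nu lower_Qplus.
apply: funext4 => i j k m.
rewrite /MJ /QplusL /SplusL /Qplus_of /Qminus_of /Sp /Sm /pc_add /pc_scale /nu /tau /chiL /alphaL.
by field.
Qed.

Lemma lowerQR T : lower G (QR G T) = pc_scale (1/96%:R) (MR (lower G T)).
Proof.
rewrite /QR lower_scale lower_Qminus lower_nu (lower_Qp lower_tau) lower_nu lower_Qminus.
apply: funext4 => i j k m.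
rewrite /MR /QminusL /SminusL /Qplus_of /Qminus_of /Sp /Sm /pc_add /pc_scale /nu /tau /chiL /alphaL.
by field.
Qed.

Lemma MJ_scale c X : MJ (pc_scale c X) = pc_scale c (MJ X).
Proof.
apply: funext4 => i j k m.
rewrite /MJ /SplusL /Sp /Sm /pc_add /pc_scale /nu /tau /chiL /alphaL; ring.
Qed.
Lemma MR_scale c X : MR (pc_scale c X) = pc_scale c (MR X).
Proof.
apply: funext4 => i j k m.
rewrite /MR /SminusL /Sp /Sm /pc_add /pc_scale /nu /tau /chiL /alphaL; ring.
Qed.

Lemma MJMJ X : MJ (MJ X) = pc_scale 96%:R (MJ X).
Proof.
apply: funext4 => i j k m.
rewrite /MJ /SplusL /Sp /Sm /pc_add /pc_scale /nu /tau /chiL /alphaL; ring.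
Qed.
Lemma MRMR X : MR (MR X) = pc_scale 96%:R (MR X).
Proof.
apply: funext4 => i j k m.
rewrite /MR /SminusL /Sp /Sm /pc_add /pc_scale /nu /tau /chiL /alphaL; ring.
Qed.

Lemma PM0 X : SplusL (SminusL X) = @pc_zero R n.
Proof.
apply: funext4 => i j k m.
rewrite /SplusL /SminusL /Sp /Sm /pc_add /pc_scale /pc_zero /nu /tau /chiL /alphaL; ring.
Qed.

Lemma MJ_MR X : MJ (MR X) = @pc_zero R n.
Proof.
rewrite /MJ /MR PM0; apply: funext4 => i j k m.
rewrite /SplusL /Sp /Sm /pc_add /pc_scale /pc_zero /nu /tau /chiL /alphaL; ring.
Qed.

Lemma ip4_zero X : ip4 X (@pc_zero R n) = 0.
Proof.
rewrite /ip4 big1 // => x _; rewrite big1 // => y _; rewrite /uc /pc_zero mulr0 //.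
Qed.

Lemma QJ_idem T : QJ G (QJ G T) = QJ G T.
Proof.
apply: lower_inj; rewrite !lowerQJ MJ_scale MJMJ; apply: funext4 => i j k m.
rewrite /pc_scale; by field.
Qed.
Lemma QR_idem T : QR G (QR G T) = QR G T.
Proof.
apply: lower_inj; rewrite !lowerQR MR_scale MRMR; apply: funext4 => i j k m.
rewrite /pc_scale; by field.
Qed.

Lemma QJ_adj T S : pc_inner G (QJ G T) S = pc_inner G T (QJ G S).
Proof. by rewrite !inner_ip4 !lowerQJ ip4_scalel ip4_scaler MJ_adj. Qed.
Lemma QR_adj T S : pc_inner G (QR G T) S = pc_inner G T (QR G S).
Proof. by rewrite !inner_ip4 !lowerQR ip4_scalel ip4_scaler MR_adj. Qed.

Lemma QJQR T : QJ G (QR G T) = @pc_zero R n.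
Proof.
apply: lower_inj; rewrite lowerQJ lowerQR MJ_scale MJ_MR lower_zero.
apply: funext4 => i j k m; rewrite /pc_scale /pc_zero; ring.
Qed.

Lemma rangeJ T : (exists S, T = QJ G S) <-> JC G T.
Proof.
split.
- move=> [S ->]; split; [|split]; apply: lower_inj.
  + rewrite lower_Cycl lowerQJ lower_zero; apply: funext4 => i j k m.
    rewrite /Cycl /MJ /SplusL /Sp /Sm /pc_add /pc_scale /pc_zero /nu /tau /chiL /alphaL; ring.
  + rewrite lower_chi lowerQJ; apply: funext4 => i j k m.
    rewrite /MJ /SplusL /Sp /Sm /pc_add /pc_scale /nu /tau /chiL /alphaL; ring.
  + rewrite lower_tau lowerQJ; apply: funext4 => i j k m.
    rewrite /MJ /SplusL /Sp /Sm /pc_add /pc_scale /nu /tau /chiL /alphaL; ring.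
- move=> [HY [HC HT]]; exists T; apply: lower_inj; rewrite lowerQJ.
  move/(congr1 (lower G)): HY; rewrite lower_Cycl lower_zero => HY.
  move/(congr1 (lower G)): HC; rewrite lower_chi => HC.
  move/(congr1 (lower G)): HT; rewrite lower_tau => HT.
  apply: funext4 => i j k m; symmetry; apply: JC_fix.
  + by move=> a b c d; exact: (congr1 (fun f => f a b c d) HT).
  + by move=> a b c d; exact: (congr1 (fun f => f a b c d) HC).
  + by move=> a b c d; exact: (congr1 (fun f => f a b c d) HY).
Qed.

Lemma rangeR T : (exists S, T = QR G S) <-> RC G T.
Proof.
split.
- move=> [S ->]; split; [|split]; apply: lower_inj.
  + rewrite lower_Cycl lowerQR lower_zero; apply: funext4 => i j k m.
    rewrite /Cycl /MR /SminusL /Sp /Sm /pc_add /pc_scale /pc_zero /nu /tau /chiL /alphaL; ring.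
  + rewrite lower_chi lowerQR; apply: funext4 => i j k m.
    rewrite /MR /SminusL /Sp /Sm /pc_add /pc_scale /nu /tau /chiL /alphaL; ring.
  + rewrite lower_tau lower_scale lowerQR; apply: funext4 => i j k m.
    rewrite /MR /SminusL /Sp /Sm /pc_add /pc_scale /nu /tau /chiL /alphaL; ring.
- move=> [HY [HC HT]]; exists T; apply: lower_inj; rewrite lowerQR.
  move/(congr1 (lower G)): HY; rewrite lower_Cycl lower_zero => HY.
  move/(congr1 (lower G)): HC; rewrite lower_chi => HC.
  move/(congr1 (lower G)): HT; rewrite lower_tau lower_scale => HT.
  apply: funext4 => i j k m; symmetry; apply: RC_fix.
  + move=> a b c d; have := congr1 (fun f => f a b c d) HT; rewrite /tau /pc_scale /= => ->.
    by rewrite mulN1r.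
  + by move=> a b c d; exact: (congr1 (fun f => f a b c d) HC).
  + by move=> a b c d; exact: (congr1 (fun f => f a b c d) HY).
Qed.

Lemma orthJR T S : JC G T -> RC G S -> pc_inner G T S = 0.
Proof.
move=> /rangeJ [T0 ->] /rangeR [S0 ->].
by rewrite QJ_adj QJQR inner_ip4 lower_zero ip4_zero.
Qed.

End Inf.

Theorem mainTheorem16 (R : realFieldType) (n : nat) (G : 'M[R]_n)
  (Gsym : G^T = G) (Gnondeg : G \in unitmx) :
  (* idempotent *)
  (forall T : PC R n, QJ G (QJ G T) = QJ G T) /\
  (forall T : PC R n, QR G (QR G T) = QR G T) /\
  (* self-adjoint *)
  (forall T S : PC R n, pc_inner G (QJ G T) S = pc_inner G T (QJ G S)) /\
  (forall T S : PC R n, pc_inner G (QR G T) S = pc_inner G T (QR G S)) /\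
  (* ranges *)
  (forall T : PC R n, (exists S : PC R n, T = QJ G S) <-> JC G T) /\
  (forall T : PC R n, (exists S : PC R n, T = QR G S) <-> RC G T) /\
  (* Q_J Q_R = 0 *)
  (forall T : PC R n, QJ G (QR G T) = @pc_zero R n) /\
  (* hence JC and RC are orthogonal *)
  (forall T S : PC R n, JC G T -> RC G S -> pc_inner G T S = 0).
Proof.
split; first by move=> *; apply: QJ_idem.
split; first by move=> *; apply: QR_idem.
split; first by move=> *; apply: QJ_adj.
split; first by move=> *; apply: QR_adj.
split; first by move=> *; apply: rangeJ.
split; first by move=> *; apply: rangeR.
split; first by move=> *; apply: QJQR.
by move=> *; apply: orthJR.
Qed.
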